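(* There exist exactly seven non-trivial shadows of genus $0$ over two backbones.
   Context: A diagram over $b$ backbones consists of the vertex set $[N]=\{1,\dots,N\}$, a partition of $[N]$ into $b$ backbones (maximal blocks of consecutive integers, ordered left to right), and a set of arcs $(i,j)$ with $i<j$, each vertex being incident to at most one arc. It is drawn with the vertices in increasing order on a horizontal line, each backbone as a segment joining its consecutive vertices, and the arcs in the upper half-plane. Two arcs $(i,j),(k,l)$ cross if $i<k<j<l$ or $k<i<l<j$. Genus: collapsing each backbone to a single vertex, the planar drawing determines a fatgraph (ribbon graph) with $b$ vertices and one edge per arc, hence an oriented surface with boundary; let $r$ be its number of boundary components (a backbone carrying no arcs contributes one boundary component). With $n$ the number of arcs, the genus $g$ is defined by $2-2g-r=b-n$. A stack is a maximal collection of arcs of the form $(i,j),(i+1,j-1),\dots,(i+\ell-1,j-\ell+1)$; its size is $\ell$. An arc is non-crossing if no other arc crosses it; a vertex is isolated if no arc is incident to it. A shadow is a diagram with no non-crossing arcs and no isolated vertices in which every stack has size one. A shadow is non-trivial if each of its backbones contains at least one vertex incident to an arc. *)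

(* Defs.v *)
From mathcomp Require Import all_boot all_order all_algebra.
Set Implicit Arguments. Unset Strict Implicit. Unset Printing Implicit Defensive.
Import GRing.Theory.

(* A diagram is a triple (N, bs, arcs):
   - vertex set [N] = {1,...,N};
   - bs = [:: s_1; ...; s_b] the sizes of the backbones, left to right
     (backbone t consists of the s_t consecutive vertices following the
     previous backbones);
   - arcs = the list of arcs (i,j), i < j, listed by increasing left end
     (canonical representation of the arc set). *)
Definition diagram := (nat * seq nat * seq (nat * nat))%type.

Definition dN (d : diagram) : nat := d.1.1.
Definition dbs (d : diagram) : seq nat := d.1.2.
Definition darcs (d : diagram) : seq (nat * nat) := d.2.

Definition nbackbones (d : diagram) : nat := size (dbs d).
Definition narcs (d : diagram) : nat := size (darcs d).

Definition endpoints (d : diagram) : seq nat :=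
  flatten [seq [:: a.1; a.2] | a <- darcs d].

Definition valid_diagram (d : diagram) : bool :=
  [&& all (fun k => 0 < k) (dbs d),
      sumn (dbs d) == dN d,
      all (fun a => [&& 1 <= a.1, a.1 < a.2 & a.2 <= dN d]) (darcs d),
      uniq (endpoints d)
    & sorted (fun a b => a.1 < b.1) (darcs d)].

Definition psums (bs : seq nat) : seq nat :=
  [seq sumn (take k.+1 bs) | k <- iota 0 (size bs)].

(* 0-based index of the backbone containing vertex v (1 <= v <= N) *)
Definition bbidx (d : diagram) (v : nat) : nat :=
  count (fun s => s < v) (psums (dbs d)).

Definition crossing (a c : nat * nat) : bool :=
  ((a.1 < c.1) && (c.1 < a.2) && (a.2 < c.2)) ||
  ((c.1 < a.1) && (a.1 < c.2) && (c.2 < a.2)).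

Definition noncrossing_arc (d : diagram) (a : nat * nat) : bool :=
  ~~ has (crossing a) (darcs d).

Definition isolated (d : diagram) (v : nat) : bool := v \notin endpoints d.

(* every stack has size one iff no two arcs (i,j), (i+1,j-1) *)
Definition stacks_size_one (d : diagram) : bool :=
  ~~ has (fun a => (a.1.+1, a.2.-1) \in darcs d) (darcs d).

Definition shadow (d : diagram) : bool :=
  [&& all (fun a => ~~ noncrossing_arc d a) (darcs d),
      all (fun v => ~~ isolated d v) (iota 1 (dN d))
    & stacks_size_one d].

Definition backbone_used (d : diagram) (t : nat) : bool :=
  has (fun v => bbidx d v == t) (endpoints d).

Definition nontrivial (d : diagram) : bool :=
  all (backbone_used d) (iota 0 (nbackbones d)).

(* Fatgraph obtained by collapsing each backbone to a vertex:
   half-edges = arc endpoints; sigma = arc involution (partner);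
   gamma = cyclic successor among the arc endpoints of the same backbone
   (left-to-right order, wrapping around).  Boundary components of the
   fatgraph = cycles of gamma o sigma, plus one per backbone without arcs. *)
Definition partner (d : diagram) (v : nat) : nat :=
  foldr (fun a r => if a.1 == v then a.2 else if a.2 == v then a.1 else r)
        v (darcs d).

Definition same_backbone_endpoints (d : diagram) (v : nat) : seq nat :=
  [seq u <- iota 1 (dN d) | (u \in endpoints d) && (bbidx d u == bbidx d v)].

Definition gamma (d : diagram) (v : nat) : nat :=
  let es := same_backbone_endpoints d v in
  nth v es ((index v es).+1 %% size es).

Definition face_perm (d : diagram) (v : nat) : nat := gamma d (partner d v).

Definition face_orbit (d : diagram) (v : nat) : seq nat :=
  [seq iter k (face_perm d) v | k <- iota 0 (dN d).+1].

(* number of cycles of gamma o sigma: count the minimal element of each *)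
Definition ncycles (d : diagram) : nat :=
  count (fun v => all (fun w => v <= w) (face_orbit d v)) (endpoints d).

Definition nboundary (d : diagram) : nat :=
  ncycles d + count (fun t => ~~ backbone_used d t) (iota 0 (nbackbones d)).

Definition has_genus (d : diagram) (g : nat) : Prop :=
  (2%:Z - (2 * g)%:Z - (nboundary d)%:Z =
   (nbackbones d)%:Z - (narcs d)%:Z)%R.

(* Main.v *)
Require Import Defs.
From mathcomp Require Import all_boot all_order all_algebra zify.

Module A.

Section Abs.
Variables (f : nat -> nat) (N a b : nat).
Definition Dm v := (1 <= v <= N).
Hypothesis fD : forall v, Dm v -> Dm (f v).
Hypothesis finj : forall u v, Dm u -> Dm v -> f u = f v -> u = v.
Hypothesis small : forall v, Dm v -> (f v = v \/ f (f v) = v) ->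
  (v \in [:: a; b]) || (f v \in [:: a; b]).

Definition cnt v := all (fun w => v <= w) [seq iter k f v | k <- iota 0 N.+1].

Lemma iter_dom k {v} : Dm v -> Dm (iter k f v).
Proof. by move=> Hv; elim: k => //= k IH; apply: fD. Qed.

Lemma iter_inj {k u v} : Dm u -> Dm v -> iter k f u = iter k f v -> u = v.
Proof.
move=> Hu Hv; elim: k => //= k IH H; apply: IH.
by apply: finj => //; apply: iter_dom.
Qed.

Lemma period {v} : Dm v -> exists2 p, 0 < p <= N & iter p f v = v.
Proof.
move=> Hv.
set s := [seq iter i f v | i <- iota 0 N.+1].
have: ~~ uniq s.
  apply/negP => Hu.
  have sub : {subset s <= iota 1 N}.
    move=> x /mapP [i _ ->]; have := iter_dom i Hv; rewrite /Dm mem_iota.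
    lia.
  have := uniq_leq_size Hu sub.
  by rewrite size_map !size_iota ltnn.
case/(uniqPn 0) => i [j [ij js]].
rewrite size_map size_iota in js.
rewrite !(nth_map 0) ?size_iota ?(ltn_trans ij) // !nth_iota ?(ltn_trans ij) //.
rewrite !add0n => Heq.
exists (j - i); first lia.
apply: (@iter_inj i); rewrite ?iter_dom //.
by rewrite -iterD subnKC ?(ltnW ij).
Qed.

Lemma iter_mulp v p q : iter p f v = v -> iter (q * p) f v = v.
Proof. move=> Hp; elim: q => //= q IH; by rewrite mulSn iterD IH. Qed.

Lemma cnt_all {v} k : Dm v -> cnt v -> v <= iter k f v.
Proof.
move=> Hv /allP Hc; have [p /andP [p0 pN] Hp] := period Hv.
have -> : iter k f v = iter (k %% p) f v.
  by rewrite {1}(divn_eq k p) addnC iterD iter_mulp.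
apply: Hc; apply/mapP; exists (k %% p) => //.
rewrite mem_iota add0n; have := ltn_pmod k p0; lia.
Qed.

Lemma cnt_eq {u v} m : Dm v -> cnt u -> cnt v -> u = iter m f v -> u = v.
Proof.
move=> Hv cu cv Hum.
have Hu : Dm u by rewrite Hum iter_dom.
have h1 := cnt_all m Hv cv.
have [p /andP [p0 pN] Hp] := period Hv.
have h2 : iter (p.-1 * m) f u = v.
  rewrite Hum -iterD -mulSnr prednK // mulnC; exact: iter_mulp.
have h3 := cnt_all (p.-1 * m) Hu cu.
rewrite h2 in h3; rewrite -Hum in h1; apply/eqP; rewrite eqn_leq h1 h3.
by [].
Qed.

Definition T v := undup [:: v; f v; f (f v)].

Lemma memT x v : x \in T v -> exists2 i, i <= 2 & x = iter i f v.
Proof.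
rewrite mem_undup !inE => /or3P [] /eqP ->.
- by exists 0.
- by exists 1.
- by exists 2.
Qed.

Lemma T_disj {u v x} : Dm u -> Dm v -> cnt u -> cnt v ->
  x \in T u -> x \in T v -> u = v.
Proof.
have H : forall i j u v, j <= i -> Dm u -> Dm v -> cnt u -> cnt v ->
    iter i f u = iter j f v -> u = v.
  move=> i j u' v' ji Hu Hv cu cv E.
  have E2 : iter j f (iter (i - j) f u') = iter j f v'.
    by rewrite -iterD subnKC.
  have E3 := iter_inj (iter_dom _ Hu) Hv E2.
  symmetry; exact: (cnt_eq (i - j) Hu cv cu (esym E3)).
move=> Hu Hv cu cv /memT [i _ ->] /memT [j _ E].
case: (leqP j i) => ij.
- exact: (H i j).
- symmetry; apply: (H j i) => //; exact: ltnW.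
Qed.

Lemma T_dom {x v} : Dm v -> x \in T v -> Dm x.
Proof. by move=> Hv /memT [i _ ->]; apply: iter_dom. Qed.

Lemma T_size {v} : Dm v -> 3 <= size (T v) + 2 * count (mem [:: a; b]) (T v).
Proof.
move=> Hv.
case Hs: ((v \in [:: a; b]) || (f v \in [:: a; b])).
  have c1 : 0 < count (mem [:: a; b]) (T v).
    rewrite -has_count; apply/hasP; case/orP: Hs => H.
      by exists v => //; rewrite mem_undup inE eqxx.
    by exists (f v) => //; rewrite mem_undup !inE eqxx orbT.
  have s1 : 0 < size (T v).
    by case: (T v) c1.
  lia.
have n1 : f v <> v by move=> E; move: (small v Hv (or_introl E)); rewrite Hs.
have n2 : f (f v) <> v by move=> E; move: (small v Hv (or_intror E)); rewrite Hs.
have n3 : f (f v) <> f v by move=> /finj E; apply: n1; apply: E => //; apply: fD.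
have : uniq [:: v; f v; f (f v)].
  rewrite /= !inE negb_or andbT; apply/andP; split; [apply/andP; split|];
   apply/eqP => //; by move/esym.
by rewrite /T => /undup_id ->.
Qed.

Lemma flat_uniq {C} : uniq C -> all Dm C -> all cnt C -> uniq (flatten (map T C)).
Proof.
elim: C => //= c C IH /andP [cC uC] /andP [Dc DC] /andP [cc cC'].
rewrite cat_uniq undup_uniq IH // andbT.
apply/hasP => [[x /flattenP [y /mapP [c' c'C ->] xy] xc]].
have Dc' : Dm c' by move/allP: DC; apply.
have E := T_disj Dc Dc' cc (allP cC' c' c'C) xc xy.
by move: cC; rewrite E c'C.
Qed.

Lemma flat_sum {C} : all Dm C ->
  3 * size C <= size (flatten (map T C)) + 2 * count (mem [:: a; b]) (flatten (map T C)).
Proof.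
elim: C => //= c C IH /andP [Dc DC].
rewrite size_cat count_cat; have := T_size Dc; have := IH DC.
move: (size (T c)) (count _ (T c)) (size (flatten _)) (count _ (flatten _)) (size C) => p q r t n; lia.
Qed.

Lemma bound E : uniq E -> (forall x, x \in E -> Dm x) -> 3 * count cnt E <= N + 4.
Proof.
move=> uE DE.
set C := filter cnt E.
have uC : uniq C by apply: filter_uniq.
have DC : all Dm C by apply/allP => x; rewrite mem_filter => /andP [_ /DE].
have cC : all cnt C by apply/allP => x; rewrite mem_filter => /andP [].
have uU := flat_uniq uC DC cC.
have S1 : size (flatten (map T C)) <= N.
  rewrite -(size_iota 1 N); apply: uniq_leq_size => // x /flattenP [y /mapP [c cin ->]].
  move=> xT; have Dc : Dm c by move/allP: DC; apply.
  have := T_dom Dc xT; rewrite /Dm mem_iota; lia.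
have S2 : count (mem [:: a; b]) (flatten (map T C)) <= 2.
  rewrite -size_filter; have -> : 2 = size [:: a; b] by [].
  apply: uniq_leq_size; first exact: filter_uniq.
  by move=> x; rewrite mem_filter => /andP [].
have H := flat_sum DC; rewrite -size_filter -/C.
move: H S1 S2; move: (size C) (size (flatten _)) (count _ (flatten _)) => p q r; lia.
Qed.
End Abs.
End A.


Definition ep (l : seq (nat * nat)) : seq nat := flatten [seq [:: a.1; a.2] | a <- l].
Definition pt (l : seq (nat * nat)) (v : nat) : nat :=
  foldr (fun a r => if a.1 == v then a.2 else if a.2 == v then a.1 else r) v l.

Lemma mem_ep {l x y} : (x, y) \in l -> (x \in ep l) && (y \in ep l).
Proof.
elim: l => //= c l IH; rewrite inE => /orP [/eqP <- | H].
  by rewrite /= !inE !eqxx orbT.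
by rewrite !mem_cat; case/andP: (IH H) => -> ->; rewrite !orbT.
Qed.

Lemma ep_mem {l v} : v \in ep l -> exists2 c, c \in l & (v == c.1) || (v == c.2).
Proof.
move=> /flattenP [s /mapP [c cl ->]]; rewrite !inE => H.
by exists c.
Qed.

Lemma size_ep l : size (ep l) = 2 * size l.
Proof. by elim: l => //= c l IH; rewrite IH mulnS. Qed.

Lemma pt_arc {l x y} : uniq (ep l) -> all (fun a => a.1 < a.2) l -> (x, y) \in l ->
  pt l x = y /\ pt l y = x.
Proof.
elim: l => //= c l IH /= /andP [c1 /andP [c2 u]] /andP [cl al].
rewrite inE => /orP [/eqP E | H].
  subst c => /=; rewrite eqxx; split => //.
  by rewrite (_ : (x == y) = false) ?eqxx //; apply/eqP => E; rewrite E ltnn in cl.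
have [Hx Hy] : x \in ep l /\ y \in ep l by case/andP: (mem_ep H).
have [p1 p2] := IH u al H.
rewrite inE negb_or in c1; case/andP: c1 => c12 c1.
have n1 : (c.1 == x) = false by apply/eqP => E; move: c1; rewrite E Hx.
have n2 : (c.1 == y) = false by apply/eqP => E; move: c1; rewrite E Hy.
have n3 : (c.2 == x) = false by apply/eqP => E; move: c2; rewrite E Hx.
have n4 : (c.2 == y) = false by apply/eqP => E; move: c2; rewrite E Hy.
by rewrite n1 n2 n3 n4.
Qed.

Module B2M.

Lemma filter_const (T : Type) (b : bool) (s : seq T) :
  filter (fun _ => b) s = if b then s else [::].
Proof. by case: b; elim: s => //= x s ->. Qed.

Lemma idx_iota m n v : m <= v < m + n -> index v (iota m n) = v - m.
Proof.
move=> H; have E : nth 0 (iota m n) (v - m) = v by rewrite nth_iota; lia.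
by rewrite -{1}E index_uniq ?iota_uniq ?size_iota //; lia.
Qed.

Section Conc.
Variables (N s1 s2 : nat) (l : seq (nat * nat)).
Hypothesis Hs1 : 0 < s1.
Hypothesis Hs2 : 0 < s2.
Hypothesis HN : s1 + s2 = N.
Hypothesis Hal : all (fun a => (1 <= a.1) && (a.1 < a.2) && (a.2 <= N)) l.
Hypothesis Hu : uniq (ep l).
Hypothesis Hcov : forall v, 1 <= v <= N -> v \in ep l.
Hypothesis Hcross : all (fun a => has (crossing a) l) l.
Hypothesis Hstack : ~~ has (fun a => (a.1.+1, a.2.-1) \in l) l.

Definition d : diagram := ((N, [:: s1; s2]), l).
Definition D v := 1 <= v <= N.

Lemma Hlt : all (fun a => a.1 < a.2) l.
Proof. by apply/allP => a /(allP Hal) /andP [/andP [_ ->]]. Qed.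

Lemma ep_dom {v} : v \in ep l -> D v.
Proof.
case/ep_mem => [[x y]] /(allP Hal) /andP [/andP [h1 h2] h3] /orP [] /eqP ->; rewrite /D /=; simpl in *; lia.
Qed.

Lemma pt_spec {v} : D v -> [/\ pt l v != v, D (pt l v), pt l (pt l v) = v &
  ((v, pt l v) \in l) || ((pt l v, v) \in l)].
Proof.
move=> Dv; case/ep_mem: (Hcov _ Dv) => [[x y] cl] /= /orP [] /eqP ->;
  have [p1 p2] := pt_arc Hu Hlt cl; rewrite ?p1 ?p2 ?p1 ?p2 ?cl ?orbT;
  have /andP [/andP [h1 h2] h3] := allP Hal _ cl; rewrite /D /=;
  (split; [apply/eqP; simpl in *; lia | simpl in *; lia | done | done]).
Qed.

Definition g v := if v == s1 then 1 else if v == N then s1.+1 else v.+1.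

Lemma bb u : u <= N -> bbidx d u = (s1 < u).
Proof. by move=> H; rewrite /bbidx /= !addn0 HN (ltnNge N u) H /= addn0. Qed.

Lemma sbe v : D v -> same_backbone_endpoints d v =
  if v <= s1 then iota 1 s1 else iota s1.+1 s2.
Proof.
move=> Dv; rewrite /same_backbone_endpoints (_ : dN d = N) // -HN iotaD filter_cat.
have Bv : bbidx d v = (s1 < v) by apply: bb; move: Dv; rewrite /D; lia.
rewrite (@eq_in_filter _ _ (fun _ => v <= s1) (iota 1 s1)); last first.
  move=> u; rewrite mem_iota => Hu'.
  rewrite /endpoints Hcov /=; last by lia.
  rewrite Bv bb; last by lia.
  rewrite (_ : s1 < u = false); last by lia.
  by case: (leqP v s1).
rewrite (@eq_in_filter _ _ (fun _ => ~~ (v <= s1)) (iota (1 + s1) s2)); last first.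
  move=> u; rewrite mem_iota => Hu'.
  rewrite /endpoints Hcov /=; last by lia.
  rewrite Bv bb; last by lia.
  rewrite (_ : s1 < u = true); last by lia.
  by case: (leqP v s1).
by rewrite !filter_const add1n; case: (v <= s1); rewrite ?cats0.
Qed.

Lemma gamma_eq {v} : D v -> gamma d v = g v.
Proof.
move=> Dv; rewrite /gamma sbe // /g; move: Dv; rewrite /D => Dv.
case: (leqP v s1) => vs.
  rewrite idx_iota ?size_iota; last by lia.
  have [->|ne] := eqVneq v s1.
    by rewrite subn1 prednK // modnn nth_iota.
  rewrite modn_small; last by lia.
  rewrite nth_iota; last by lia.
  rewrite (_ : (v == N) = false); last by apply/eqP; lia.
  lia.
rewrite idx_iota ?size_iota; last by lia.
rewrite (_ : (v == s1) = false); last by apply/eqP; lia.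
have [->|ne] := eqVneq v N.
  rewrite (_ : (N - s1.+1).+1 = s2); last by lia.
  by rewrite modnn nth_iota // addn0.
rewrite modn_small; last by lia.
rewrite nth_iota; last by lia.
lia.
Qed.

Lemma face_eq {v} : D v -> face_perm d v = g (pt l v).
Proof. by move=> Dv; rewrite /face_perm gamma_eq //; case: (pt_spec Dv). Qed.

Lemma g_dom {w} : D w -> D (g w).
Proof.
rewrite /D /g => H; case: eqP => ?; first lia.
case: eqP => ?; lia.
Qed.

Lemma g_inj {u v} : D u -> D v -> g u = g v -> u = v.
Proof.
rewrite /D /g => H1 H2; case: (u =P s1) => ?; case: (u =P N) => ?; case: (v =P s1) => ?; case: (v =P N) => ?; lia.
Qed.

Lemma g_inv {w} : D w -> g w != 1 -> g w != s1.+1 -> g w = w.+1.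
Proof.
move=> H; rewrite /g; case: ifP => _; first by rewrite eqxx.
case: ifP => _ //; by rewrite eqxx.
Qed.


Lemma arc_lt x y : (x, y) \in l -> x < y.
Proof. by move=> /(allP Hal) /andP [/andP [_ h] _]. Qed.

Lemma ptlt {v} : D v -> v < pt l v -> (v, pt l v) \in l.
Proof.
move=> Dv lt; case: (pt_spec Dv) => _ _ _ /orP [] // /arc_lt; lia.
Qed.

Lemma ptgt {v} : D v -> pt l v < v -> (pt l v, v) \in l.
Proof.
move=> Dv lt; case: (pt_spec Dv) => _ _ _ /orP [] // /arc_lt; lia.
Qed.

Lemma no_nc w : (w, w.+1) \in l -> False.
Proof.
move=> H; have := allP Hcross _ H => /hasP [[x y] _].
rewrite /crossing /=; lia.
Qed.

Lemma no_stack x y : (x, y) \in l -> (x.+1, y.-1) \in l -> False.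
Proof.
move=> H1 H2; move/negP: Hstack; apply; apply/hasP; by exists (x, y).
Qed.

Notation f := (face_perm d).

Lemma fD {v} : D v -> D (f v).
Proof. move=> Dv; rewrite face_eq //; apply: g_dom; by case: (pt_spec Dv). Qed.

Lemma finj {u v} : D u -> D v -> f u = f v -> u = v.
Proof.
move=> Du Dv; rewrite !face_eq //.
case: (pt_spec Du) => _ Du' pu _; case: (pt_spec Dv) => _ Dv' pv _.
move/(g_inj Du' Dv') => E; by rewrite -pu E pv.
Qed.

Lemma fix_case v : D v -> v != 1 -> v != s1.+1 -> f v = v -> False.
Proof.
move=> Dv v1 v2; rewrite face_eq // => E.
case: (pt_spec Dv) => pn Dp pp _.
have := g_inv Dp; rewrite E => /(_ v1 v2) Ev.
have A : (pt l v, v) \in l by apply: ptgt => //; lia.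
move: A; rewrite {2}Ev; exact: no_nc.
Qed.

Lemma small {v} : D v -> (f v = v \/ f (f v) = v) ->
  (v \in [:: 1; s1.+1]) || (f v \in [:: 1; s1.+1]).
Proof.
move=> Dv H; apply/negPn/negP; rewrite negb_or !inE !negb_or.
case/andP => /andP [v1 v2] /andP [w1 w2].
case: H => [|H]; first exact: fix_case.
have Dw := fD Dv.
have [Evw|nvw] := eqVneq (f v) v; first exact: (fix_case v Dv v1 v2 Evw).
case: (pt_spec Dv) => pnv Dx pxv _.
case: (pt_spec Dw) => pnw Dy pyw _.
have Ew : f v = (pt l v).+1.
  have := g_inv Dx; rewrite -face_eq //; exact.
have Ev : v = (pt l (f v)).+1.
  have := g_inv Dy; rewrite -face_eq // H; move=> G; exact: G.
move: pnv pnw pxv pyw nvw Ew Ev Dx Dy Dw.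
move Ex: (pt l v) => x; move Ew0: (f v) => w; move Ey: (pt l w) => y.
move=> pnv pnw pxv pyw nvw Ew Ev Dx Dy Dw.
move/eqP: pnv => pnv; move/eqP: pnw => pnw; move/eqP: nvw => nvw.
case: (ltngtP v w) => [vw|wv|evw].
- have A1 : (y, w) \in l by rewrite -Ey; apply: ptgt => //; rewrite Ey; clear -Ev vw; lia.
  have A2 : (v, x) \in l by rewrite -Ex; apply: ptlt => //; rewrite Ex; clear -Ew pnv vw; lia.
  apply: (no_stack _ _ A1).
  have -> : y.+1 = v by clear -Ev; lia.
  have -> : w.-1 = x by clear -Ew; lia.
  exact: A2.
- have A1 : (x, v) \in l by rewrite -Ex; apply: ptgt => //; rewrite Ex; clear -Ew wv; lia.
  have A2 : (w, y) \in l by rewrite -Ey; apply: ptlt => //; rewrite Ey; clear -Ev pnw wv; lia.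
  apply: (no_stack _ _ A1).
  have -> : x.+1 = w by clear -Ew; lia.
  have -> : v.-1 = y by clear -Ev; lia.
  exact: A2.
- by apply: nvw.
Qed.


Lemma ep_perm : perm_eq (ep l) (iota 1 N).
Proof.
apply: uniq_perm => //; first exact: iota_uniq.
move=> x; rewrite mem_iota; apply/idP/idP.
  move/ep_dom; rewrite /D; lia.
move=> H; apply: Hcov; lia.
Qed.

Lemma size_bound : ncycles d = size l -> N <= 8.
Proof.
move=> Hnc.
have Hep := ep_perm.
have HsN : 2 * size l = N by rewrite -size_ep (perm_size Hep) size_iota.
have B := @A.bound (face_perm d) N 1 s1.+1 (fun v => @fD v) (fun u v => @finj u v)
  (fun v => @small v) (ep l) Hu (fun x => @ep_dom x).
have E : count (A.cnt (face_perm d) N) (ep l) = ncycles d by [].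
rewrite E Hnc in B; lia.
Qed.
End Conc.
End B2M.
Import B2M.


Fixpoint gen (k : nat) (av : seq nat) : seq (seq (nat * nat)) :=
  match av with
  | [::] => [:: [::]]
  | x :: r => if k is k'.+1 then
      flatten [seq [seq (x, y) :: m | m <- gen k' (rem y r)] | y <- r]
    else [::]
  end.

Lemma gen_complete l : forall k av, size av <= k -> sorted ltn av -> perm_eq (ep l) av ->
  sorted (fun a b : nat * nat => a.1 < b.1) l -> all (fun a : nat * nat => a.1 < a.2) l ->
  l \in gen k av.
Proof.
elim: l => [|[x1 y1] l IH] k av.
  move=> _ _ /perm_size /esym /size0nil -> _ _; by case: k.
case: av => [|x r]; first by move=> _ _ /perm_size.
case: k => [|k] // Hk Hs Hp Hsl /= /andP [xy Hl].
have Hmin : forall z, z \in ep ((x1, y1) :: l) -> x1 <= z.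
  move=> z; rewrite /ep /= !inE => /orP [/eqP ->//|/orP [/eqP ->|]]; first exact: ltnW.
  move=> /ep_mem [[c1 c2] cl] /= H.
  have tr : transitive (fun a b : nat * nat => a.1 < b.1).
    by move=> ? ? ? h1 h2; exact: ltn_trans h1 h2.
  have := order_path_min tr Hsl.
  move=> /allP /(_ _ cl) /= h1; have /= h2 := allP Hl _ cl.
  case/orP: H => /eqP ->; lia.
have xe : x \in ep ((x1, y1) :: l) by rewrite (perm_mem Hp) inE eqxx.
have x1e : x1 \in x :: r by rewrite -(perm_mem Hp) /ep /= inE eqxx.
have y1e : y1 \in x :: r by rewrite -(perm_mem Hp) /ep /= !inE eqxx orbT.
have Hxm : forall z, z \in x :: r -> x <= z.
  move=> z; rewrite inE => /orP [/eqP -> //|zr].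
  have := order_path_min ltn_trans Hs => /allP /(_ _ zr); exact: ltnW.
have Ex : x = x1 by apply/eqP; rewrite eqn_leq (Hmin _ xe) (Hxm _ x1e).
subst x.
have y1r : y1 \in r.
  move: y1e; rewrite inE => /orP [/eqP E|//]; lia.
have Hp2 : perm_eq (ep l) (rem y1 r).
  move: Hp; rewrite /ep /= perm_cons => Hp.
  have := perm_trans Hp (perm_to_rem y1r); by rewrite perm_cons.
apply/flattenP; exists [seq (x1, y1) :: m | m <- gen k (rem y1 r)].
  by apply/mapP; exists y1.
apply: map_f; apply: IH => //.
- rewrite size_rem //; move: Hk => /=; lia.
- apply: (subseq_sorted ltn_trans (rem_subseq _ _)); exact: path_sorted Hs.
- exact: path_sorted Hsl.
Qed.

Definition genb (d : diagram) : bool :=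
  (2%:Z - (2 * 0)%:Z - (nboundary d)%:Z == (nbackbones d)%:Z - (narcs d)%:Z)%R.

Definition Pb (d : diagram) : bool :=
  [&& valid_diagram d, nbackbones d == 2, shadow d, nontrivial d & genb d].

Definition enum : seq diagram :=
  flatten [seq flatten [seq [seq ((N, [:: s1; N - s1]), m) | m <- gen N (iota 1 N)]
                         | s1 <- iota 1 N] | N <- iota 0 9].

Definition sl : seq diagram :=
  [:: ((4, [:: 1; 3]), [:: (1,3); (2,4)]);
      ((4, [:: 2; 2]), [:: (1,3); (2,4)]);
      ((4, [:: 3; 1]), [:: (1,3); (2,4)]);
      ((6, [:: 2; 4]), [:: (1,4); (2,5); (3,6)]);
      ((6, [:: 3; 3]), [:: (1,3); (2,5); (4,6)]);
      ((6, [:: 4; 2]), [:: (1,4); (2,5); (3,6)]);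
      ((8, [:: 4; 4]), [:: (1,4); (2,6); (3,7); (5,8)])].

Lemma check1 : all (fun d => Pb d ==> (d \in sl)) enum.
Proof. vm_compute. reflexivity. Qed.

Lemma check2 : all Pb sl.
Proof. vm_compute. reflexivity. Qed.

Lemma check3 : uniq sl.
Proof. vm_compute. reflexivity. Qed.

Lemma Pb_iff d : (valid_diagram d /\ nbackbones d = 2 /\ shadow d /\ nontrivial d /\
       has_genus d 0) <-> Pb d.
Proof.
rewrite /Pb /has_genus /genb; split.
  by case=> -> [/eqP -> [-> [-> /eqP ->]]].
by case/and5P => -> /eqP -> -> -> /eqP.
Qed.

Lemma in_enum d : Pb d -> d \in enum.
Proof.
case: d => [[N bs] l]; case/and5P => Hv Hb Hsh Hnt Hg.
case: bs Hv Hb Hsh Hnt Hg => [|s1 [|s2 [|s3 bs]]] // Hv _ Hsh Hnt Hg.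
case/and5P: Hv => /= Hpos /eqP HsumN Hal3 Hu Hsort.
move: Hpos; rewrite andbT => /andP [Hs1 Hs2].
rewrite /dN /= addn0 in HsumN.
have Hal : all (fun a : nat * nat => (1 <= a.1) && (a.1 < a.2) && (a.2 <= N)) l.
  by apply/allP => a /(allP Hal3); rewrite andbA.
case/and3P: Hsh => Hnc Hiso Hst.
have Hcross : all (fun a => has (crossing a) l) l.
  by apply/allP => a /(allP Hnc); rewrite /noncrossing_arc negbK.
have Hcov : forall v, 1 <= v <= N -> v \in ep l.
  move=> v Hv; have := allP Hiso v; rewrite mem_iota /isolated negbK /dN /=; apply; lia.
have Hncyc : ncycles (d N s1 s2 l) = size l.
  move: Hnt Hg; rewrite /nontrivial /genb /nboundary /= => /andP [H0 /andP [H1 _]].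
  rewrite H0 H1 /= addn0 => /eqP H.
  move: H; rewrite /nbackbones /narcs /= => H.
  have : ncycles ((N, [:: s1; s2]), l) = size l by lia.
  by [].
have HN8 : N <= 8 := (@size_bound N s1 s2 l Hs1 Hs2 HsumN Hal Hu Hcov Hcross Hst Hncyc).
have Hep : perm_eq (ep l) (iota 1 N) := (@ep_perm N s1 s2 l Hs1 Hs2 HsumN Hal Hu Hcov Hcross Hst).
have Hlt : all (fun a : nat * nat => a.1 < a.2) l.
  by apply/allP => a /(allP Hal) /andP [/andP [_ ->]].
have Hl : l \in gen N (iota 1 N).
  apply: gen_complete => //; first by rewrite size_iota.
  exact: iota_ltn_sorted.
rewrite /enum; apply/flattenP; exists (flatten [seq [seq ((N, [:: s0; N - s0]), m) | m <- gen N (iota 1 N)]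
                         | s0 <- iota 1 N]).
  apply/mapP; exists N; [rewrite mem_iota; clear -HN8; lia | reflexivity].
apply/flattenP; exists [seq ((N, [:: s1; N - s1]), m) | m <- gen N (iota 1 N)].
  apply/mapP; exists s1; [rewrite mem_iota; clear -Hs1 Hs2 HsumN; lia | reflexivity].
rewrite (_ : s2 = N - s1); last by clear -HsumN; lia.
exact: map_f.
Qed.

Theorem corollary2 :
  exists s : seq diagram,
    uniq s /\ size s = 7 /\
    forall d : diagram,
      (valid_diagram d /\ nbackbones d = 2 /\ shadow d /\ nontrivial d /\
       has_genus d 0) <-> d \in s.
Proof.
exists sl; split; first exact: check3.
split; first by [].
move=> d; rewrite Pb_iff; split.
  move=> H; have := allP check1 d (in_enum _ H); by rewrite H.
by move=> H; apply: (allP check2).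
Qed.
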